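(* Let $n\ge 1$ be an integer, $x>0$, and $0<v<nx$. Put $m\equiv\lfloor v/x\rfloor$, $r\equiv v-mx$ and $y\equiv x-r$. Then every vector in the convex hull $\mathrm{Conv}(\Gamma(m,y,r))$ is an optimal solution of \[ \min\; f(\boldsymbol v)\quad\text{s.t.}\quad \boldsymbol v\in\Lambda(v). \]
   Context: For $v>0$, $\Lambda(v)$ is the set of vectors in $\mathbb{R}^n$ with nonnegative coordinates summing to $v$. For $\boldsymbol v=(v_1,\dots,v_n)$, $f(\boldsymbol v)\equiv\sum_{1\le l\le k\le n}\bigl(x-\sum_{i=l}^k v_i\bigr)^+$, where $a^+=\max\{a,0\}$. For integers $0\le m<n$ and reals $y,r\ge0$, let $\Delta_y\equiv\lfloor\frac{n+1}{m+1}\rfloor$ and $\Delta_r\equiv\lfloor\frac{n+1}{m+2}\rfloor$. The set $\Gamma(m,y,r)$ (''duo-equidistant vectors'') consists of all $\boldsymbol v=\boldsymbol v_y+\boldsymbol v_r\in\mathbb{R}^n$ where: $\boldsymbol v_y$ has $i$-th coordinate $y$ if $i\in\{\sum_{k=1}^{j}\Delta_{y,k}: 1\le j\le m\}$ and $0$ otherwise, for some integers $\Delta_{y,1},\dots,\Delta_{y,m+1}\in\{\Delta_y,\Delta_y+1\}$ with $\sum_{k=1}^{m+1}\Delta_{y,k}=n+1$; and $\boldsymbol v_r$ has $i$-th coordinate $r$ if $i\in\{\sum_{k=1}^{j}\Delta_{r,k}: 1\le j\le m+1\}$ and $0$ otherwise, for some integers $\Delta_{r,1},\dots,\Delta_{r,m+2}\in\{\Delta_r,\Delta_r+1\}$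 with $\sum_{k=1}^{m+2}\Delta_{r,k}=n+1$. *)

(* Defs.v *)
From mathcomp Require Import all_boot all_order all_algebra.
From mathcomp Require Import reals.
Set Implicit Arguments. Unset Strict Implicit. Unset Printing Implicit Defensive.
Import Order.TTheory GRing.Theory Num.Theory.
Local Open Scope ring_scope.

Section Defs.
Variable R : realType.

(* Vectors of R^n are functions 'I_n -> R; coordinate i : 'I_n is the
   paper's coordinate i+1. *)

Definition Lambda (n : nat) (v : R) (w : 'I_n -> R) : Prop :=
  (forall i, 0 <= w i) /\ \sum_(i < n) w i = v.

Definition pos_part (a : R) : R := Num.max a 0.

Definition fobj (n : nat) (x : R) (w : 'I_n -> R) : R :=
  \sum_(l < n) \sum_(k < n | (l <= k)%N)
     pos_part (x - \sum_(i < n | (l <= i)%N && (i <= k)%N) w i).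

(* Equidistant positions: with gaps d_1..d_{p+1} (here d 0 .. d p), all in
   {D, D+1} with total n+1, the marked (1-based) positions are the partial
   sums d_1+...+d_j, 1 <= j <= p.  [marked n p d i] says that the 1-based
   coordinate i+1 of i : 'I_n is one of them. *)
Definition valid_gaps (n p : nat) (d : nat -> nat) : Prop :=
  let D := (n.+1 %/ p.+1)%N in
  (forall k, (k < p.+1)%N -> d k = D \/ d k = D.+1) /\
  (\sum_(0 <= k < p.+1) d k)%N = n.+1.

Definition marked (n p : nat) (d : nat -> nat) (i : 'I_n) : bool :=
  [exists j : 'I_p.+1, (1 <= j)%N && ((\sum_(0 <= k < j) d k)%N == i.+1)].

Definition marked_vec (n p : nat) (d : nat -> nat) (a : R) : 'I_n -> R :=
  fun i => if marked p d i then a else 0.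

Definition Gamma (n m : nat) (y r : R) (w : 'I_n -> R) : Prop :=
  exists dy dr : nat -> nat,
    [/\ valid_gaps n m dy, valid_gaps n m.+1 dr &
        forall i, w i = marked_vec m dy y i + marked_vec m.+1 dr r i].

Definition conv_hull (n : nat) (S : ('I_n -> R) -> Prop) (w : 'I_n -> R) : Prop :=
  exists (k : nat) (lam : 'I_k -> R) (p : 'I_k -> 'I_n -> R),
    [/\ forall j, 0 <= lam j, \sum_(j < k) lam j = 1, forall j, S (p j) &
        forall i, w i = \sum_(j < k) lam j * p j i].

End Defs.

(* Main.v *)
Require Import Defs.
From mathcomp Require Import all_boot all_order all_algebra.
From mathcomp Require Import reals.
From mathcomp Require Import zify ring lra.
Set Implicit Arguments. Unset Strict Implicit.

Definition pairsum_nat n (kap : nat -> nat) : nat :=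
  \sum_(l < n) \sum_(k < n | (l <= k)%N) (kap l == kap k.+1).

Definition cnt n (kap : nat -> nat) c : nat := \sum_(a < n.+1) (kap a == c).

Lemma sum_pick K j (F : nat -> nat) : (j < K)%N ->
  \sum_(c < K) (j == c) * F c = F j.
Proof.
move=> jK; rewrite (bigD1 (Ordinal jK)) //= eqxx mul1n big1 ?addn0 // => c cj.
suff -> : (j == c) = false by rewrite mul0n.
apply/negbTE; apply: contra cj => /eqP e; apply/eqP; apply: val_inj => /=; by rewrite e.
Qed.

Lemma pairsum_S n kap :
  pairsum_nat n.+1 kap = pairsum_nat n kap + cnt n kap (kap n.+1).
Proof.
rewrite /pairsum_nat /cnt.
rewrite (eq_bigr (fun l : 'I_n.+1 => \sum_(k < n | (l <= k)%N) (kap l == kap k.+1) + (kap l == kap n.+1))); last first.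
  move=> l _; rewrite big_mkcond big_ord_recr /= -big_mkcond /=.
  by rewrite ifT // -ltnS.
rewrite big_split /=; congr (_ + _).
rewrite big_ord_recr /= [X in _ + X = _]big1 ?addn0 //.
move=> k; rewrite leqNgt => /negbTE; by rewrite ltn_ord.
Qed.

Lemma cnt_S n kap c : cnt n.+1 kap c = cnt n kap c + (kap n.+1 == c).
Proof. by rewrite /cnt big_ord_recr. Qed.

Lemma sum_ind1 K j : (j < K)%N -> \sum_(c < K) (j == c) = 1%N.
Proof. move=> jK; rewrite -(sum_pick (fun _ => 1%N) jK); apply: eq_bigr => c _; by rewrite muln1. Qed.

Lemma count_lemma n kap K : (forall a, (a <= n)%N -> (kap a < K)%N) ->
  (2 * pairsum_nat n kap + n.+1 = \sum_(c < K) (cnt n kap c) ^ 2)%N.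
Proof.
elim: n => [|n IH] hK.
  rewrite /pairsum_nat big_ord0 muln0 add0n.
  rewrite (eq_bigr (fun c : 'I_K => ((kap 0 == c) : nat))); first by rewrite sum_ind1 // hK.
  by move=> c _; rewrite /cnt big_ord_recr big_ord0 /= add0n; case: (_ == _).
rewrite pairsum_S.
have hK' : forall a, (a <= n)%N -> (kap a < K)%N by move=> a an; apply: hK; lia.
have kK : (kap n.+1 < K)%N by apply: hK.
rewrite (eq_bigr (fun c : 'I_K => (cnt n kap c) ^ 2 + 2 * ((kap n.+1 == c) * cnt n kap c) + (kap n.+1 == c))%N); last first.
  by move=> c _; rewrite cnt_S; case: (_ == _); rewrite ?muln0 ?mul0n ?addn0 ?mul1n ?muln1; lia.
rewrite !big_split /= big1_eq (sum_pick (cnt n kap) kK) sum_ind1 // -IH //; lia.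
Qed.

Lemma cnt_sum n kap K : (forall a, (a <= n)%N -> (kap a < K)%N) ->
  (\sum_(c < K) cnt n kap c = n.+1)%N.
Proof.
move=> hK; rewrite /cnt exchange_big /=.
rewrite (eq_bigr (fun _ => 1%N)); first by rewrite sum_nat_const card_ord muln1.
move=> a _; apply: sum_ind1; apply: hK; by rewrite -ltnS.
Qed.

Lemma sq_bound a q : ((2 * q + 1) * a <= a ^ 2 + q * (q + 1))%N.
Proof.
case: (leqP a q) => h.
  have [t ->] : exists t, q = (a + t)%N by exists (q - a)%N; lia.
  nia.
have [t ->] : exists t, a = (q + 1 + t)%N by exists (a - q - 1)%N; lia.
nia.
Qed.

Lemma sumsq_bound K (f : nat -> nat) q :
  ((2 * q + 1) * (\sum_(c < K) f c) <= \sum_(c < K) (f c) ^ 2 + K * (q * (q + 1)))%N.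
Proof.
rewrite big_distrr /=.
have -> : (K * (q * (q + 1)) = \sum_(c < K) q * (q + 1))%N by rewrite sum_nat_const card_ord.
rewrite -big_split /=; apply: leq_sum => c _; exact: sq_bound.
Qed.

Lemma sumsq_eq K (f : nat -> nat) q : (forall c, (c < K)%N -> f c = q \/ f c = q.+1) ->
  ((2 * q + 1) * (\sum_(c < K) f c) = \sum_(c < K) (f c) ^ 2 + K * (q * (q + 1)))%N.
Proof.
move=> hf; rewrite big_distrr /=.
have -> : (K * (q * (q + 1)) = \sum_(c < K) q * (q + 1))%N by rewrite sum_nat_const card_ord.
rewrite -big_split /=; apply: eq_bigr => c _.
by case: (hf c (ltn_ord c)) => ->; nia.
Qed.

Lemma IC N lo hi : (lo <= hi)%N ->
  (\sum_(j < N) ((lo <= j) && (j < hi)) = minn hi N - minn lo N)%N.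
Proof.
move=> h; elim: N => [|N IH]; first by rewrite big_ord0; lia.
rewrite big_ord_recr /= IH.
by case: (leqP lo N) => h1; case: (ltnP N hi) => h2 /=; lia.
Qed.

Lemma sum_eq_ge K (f g : nat -> nat) : (forall c, (c < K)%N -> (g c <= f c)%N) ->
  (\sum_(c < K) f c = \sum_(c < K) g c)%N -> forall c, (c < K)%N -> f c = g c.
Proof.
move=> hge hs c cK.
have E : (\sum_(c < K) f c = \sum_(c < K) g c + \sum_(c < K) (f c - g c))%N.
  by rewrite -big_split /=; apply: eq_bigr => i _; rewrite subnKC // hge.
have : (\sum_(c < K) (f c - g c) == 0)%N by lia.
rewrite sum_nat_eq0 => /forallP /(_ (Ordinal cK)) /= /eqP.
have := hge c cK; lia.
Qed.

Section Marks.
Variables (n p : nat) (d : nat -> nat).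
Hypothesis vg : valid_gaps n p d.
Hypothesis pn : (p <= n)%N.

Definition S j := (\sum_(0 <= k < j) d k)%N.
Definition sig a := (\sum_(j < p.+1 | (1 <= j)%N) (S j <= a))%N.
Definition cm a := (\sum_(i < n) ((i < a) && marked p d i))%N.

Lemma d_pos k : (k < p.+1)%N -> (1 <= d k)%N.
Proof.
move=> kp; have [h _] := vg; have Dp : (0 < n.+1 %/ p.+1)%N by rewrite divn_gt0.
by case: (h k kp) => ->; lia.
Qed.

Lemma S_step j : S j.+1 = (S j + d j)%N.
Proof. by rewrite /S big_nat_recr. Qed.

Lemma S_mono j j' : (j <= j')%N -> (S j <= S j')%N.
Proof.
move=> h; elim: j' h => [|j' IH]; first by rewrite leqn0 => /eqP ->.
rewrite leq_eqVlt => /orP[/eqP -> //|]; rewrite ltnS => h.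
rewrite S_step; apply: leq_trans (IH h) _; exact: leq_addr.
Qed.

Lemma S_strict j j' : (j < j')%N -> (j' <= p.+1)%N -> (S j < S j')%N.
Proof.
move=> h1 h2; have h3 : (j' = j'.-1.+1)%N by lia.
rewrite h3 S_step; have := S_mono (_ : (j <= j'.-1)%N); have := d_pos (_ : (j'.-1 < p.+1)%N).
move=> A B; have a1 := A ltac:(lia); have b1 := B ltac:(lia); lia.
Qed.

Lemma S_top : S p.+1 = n.+1.
Proof. by have [_ h] := vg. Qed.

Lemma S0 : S 0 = 0%N.
Proof. by rewrite /S big_geq. Qed.

Lemma cm_S a (h : (a < n)%N) : cm a.+1 = (cm a + marked p d (Ordinal h))%N.
Proof.
rewrite /cm.
have -> : (\sum_(i < n) ((i < a.+1) && marked p d i) =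
    \sum_(i < n) ((i < a) && marked p d i) + \sum_(i < n) ((i == a :> nat) && marked p d i))%N.
  rewrite -big_split /=; apply: eq_bigr => i _.
  by rewrite ltnS leq_eqVlt; case: (ltngtP i a) => //=; case: (marked _ _ _).
congr (_ + _)%N; rewrite (bigD1 (Ordinal h)) //= eqxx /= big1 ?addn0 // => i hi.
case: eqP => // E; exfalso; move: hi; apply/negP; rewrite negbK; apply/eqP; exact: val_inj.
Qed.

Lemma sig_S a : sig a.+1 = (sig a + \sum_(j < p.+1 | (1 <= j)%N) (S j == a.+1))%N.
Proof.
rewrite /sig -big_split /=; apply: eq_bigr => j _.
by rewrite leq_eqVlt ltnS; case: (ltngtP (S j) a.+1) => //= h; lia.
Qed.

Lemma sig_hit a (h : (a < n)%N) :
  (\sum_(j < p.+1 | (1 <= j)%N) (S j == a.+1))%N = marked p d (Ordinal h).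
Proof.
rewrite /marked; case: existsP => [[j0 /andP[j01 /eqP j0E]]|hn].
  have j0E' : S j0 = a.+1 by [].
  rewrite (bigD1 j0) //= j0E' eqxx big1 ?addn0 // => j /andP[j1 jj0].
  case: eqP => // E.
  have : (val j != val j0) by [].
  case: (ltngtP j j0) => hj // _.
  - by have := S_strict hj (ltnW (ltn_ord j0)); rewrite E j0E' ltnn.
  - by have := S_strict hj (ltnW (ltn_ord j)); rewrite E j0E' ltnn.
apply: big1 => j j1; apply/eqP; rewrite eqb0; apply/negP => E; apply: hn.
by exists j; rewrite j1.
Qed.

Lemma cm_sig a : (a <= n)%N -> cm a = sig a.
Proof.
elim: a => [|a IH] h.
  rewrite /cm /sig !big1 // => j j1.
    have h1 := S_mono j1; have h2 := d_pos (ltn0Sn p).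
    have h3 : S 1 = d 0 by rewrite /S big_nat1.
    suff : (0 < S j)%N by case: (S j).
    lia.
have an : (a < n)%N by [].
rewrite (cm_S an) sig_S (sig_hit an) IH //; exact: ltnW.
Qed.

Lemma sig_val c a : (c <= p)%N -> (S c <= a)%N -> (a < S c.+1)%N -> sig a = c.
Proof.
move=> cp h1 h2; rewrite /sig.
rewrite (eq_bigr (fun j : 'I_p.+1 => (j <= c)%N : nat)); last first.
  move=> j _; case: (leqP j c) => hj.
    by rewrite (leq_trans (S_mono hj) h1).
  have h3 := S_mono hj; suff -> : (S j <= a)%N = false by [].
  apply/negbTE; rewrite -ltnNge; exact: leq_trans h2 h3.
rewrite big_mkcond /=.
rewrite (eq_bigr (fun j : 'I_p.+1 => ((1 <= j) && (j < c.+1))%N : nat)); last first.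
  by move=> j _; case: (1 <= j)%N.
by rewrite IC //; lia.
Qed.

Lemma sig_le a : (sig a <= p)%N.
Proof.
rewrite /sig big_mkcond /=.
apply: (@leq_trans (\sum_(j < p.+1) ((1 <= j) && (j < p.+1)))%N).
  by apply: leq_sum => j _; rewrite ltn_ord andbT; case: ifP => // _; case: (S j <= a)%N.
by rewrite IC //; lia.
Qed.

Lemma cm_lt a : (a <= n)%N -> (cm a < p.+1)%N.
Proof. by move=> h; rewrite cm_sig // ltnS sig_le. Qed.

Lemma cnt_cm c : (c < p.+1)%N -> cnt n cm c = d c.
Proof.
apply: sum_eq_ge.
  move=> c0 c0p.
  have e1 : d c0 = (S c0.+1 - S c0)%N by rewrite S_step; lia.
  have e2 : (S c0.+1 <= n.+1)%N by rewrite -S_top; apply: S_mono.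
  have e3 : (S c0 <= S c0.+1)%N by apply: S_mono.
  have e4 : (\sum_(a < n.+1) ((S c0 <= a) && (a < S c0.+1)) = S c0.+1 - S c0)%N.
    by rewrite IC //; lia.
  rewrite e1 -e4 /cnt; apply: leq_sum => a _.
  case: (boolP ((S c0 <= a) && (a < S c0.+1))) => // /andP[b1 b2].
  have an : (a <= n)%N by have := leq_trans b2 e2; rewrite ltnS.
  by rewrite cm_sig // (sig_val _ b1 b2) ?eqxx //; rewrite -ltnS.
rewrite (cnt_sum (K := p.+1)); last exact: cm_lt.
by have [_ h] := vg; rewrite -h big_mkord.
Qed.

Lemma cm_n : cm n = p.
Proof.
rewrite cm_sig // (sig_val (c := p)) //.
  by have := S_strict (ltnSn p) (leqnn _); rewrite S_top ltnS.
by rewrite S_top.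
Qed.

End Marks.

Import Order.TTheory GRing.Theory Num.Theory.
Local Open Scope ring_scope.


Section Cut.
Variable R : realFieldType.

Lemma le_bigmax_seq (r : seq R) (P : pred R) s :
  s \in r -> P s -> s <= \big[Num.max/0]_(i <- r | P i) i.
Proof.
elim: r => //= a r IH; rewrite inE big_cons => /orP[/eqP-> Ps|sr Ps].
  by rewrite Ps le_max lexx.
case: ifP => _; last exact: IH.
by rewrite le_max IH ?orbT.
Qed.

Variable U : seq R.
Hypothesis Uu : uniq U.
Hypothesis U0 : 0 \in U.
Hypothesis Uge0 : forall t, t \in U -> 0 <= t.

Definition pr (t : R) : R := \big[Num.max/0]_(s <- U | s < t) s.

Lemma pr_mem t : pr t \in U.
Proof.
rewrite /pr big_seq_cond; elim/big_rec: _ => // s a /andP[sU _] aU.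
by case: (leP s a).
Qed.

Lemma pr_lt t : 0 < t -> pr t < t.
Proof.
move=> t0; rewrite /pr; elim/big_rec: _ => // s a st at'.
by rewrite gt_max st at'.
Qed.

Lemma pr_ge t s : s \in U -> s < t -> s <= pr t.
Proof. by move=> sU st; apply: le_bigmax_seq. Qed.

Definition cntlt (b : R) := count (fun t => t < b) U.

Definition ind (b : bool) : R := (b : nat)%:R.

Definition J (F : R -> R) := \sum_(t <- U | 0 < t) (t - pr t) * F t.

Lemma J_le b : b \in U -> J (fun t => ind (t <= b)) = b.
Proof.
suff H : forall k b, b \in U -> (cntlt b <= k)%N ->
    J (fun t => ind (t <= b)) = b.
  by move=> bU; apply: (H _ b bU (leqnn _)).
clear b; elim => [|k IH] b bU hc.
  have b0 : b = 0.
    apply/eqP; rewrite eq_le Uge0 // andbT; apply/negP => /negP; rewrite -ltNge => b0.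
    have : (0 < cntlt b)%N by rewrite -has_count; apply/hasP; exists 0.
    by rewrite leqn0 in hc; rewrite (eqP hc).
  rewrite b0 /J big1 // => t t0; by rewrite /ind lt_geF // mulr0.
case: (leP b 0) => [b0|bpos].
  have -> : b = 0 by apply/eqP; rewrite eq_le b0 Uge0.
  by rewrite /J big1 // => t t0; rewrite /ind lt_geF // mulr0.
have prU := pr_mem b; have prlt := pr_lt bpos.
have E : forall t, t \in U -> ind (t <= b) = ind (t == b) + ind (t <= pr b) :> R.
  move=> t tU; case: (ltgtP t b) => [tb|bt|->].
  - by rewrite /ind pr_ge // add0r.
  - by rewrite /ind add0r lt_geF // (lt_trans prlt bt).
  - by rewrite /ind (lt_geF prlt) addr0.
rewrite /J big_seq_cond (eq_bigr (fun t => (t - pr t) * ind (t == b) + (t - pr t) * ind (t <= pr b))); last first.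
  by move=> t /andP[tU _]; rewrite E // mulrDr.
rewrite big_split /= -big_seq_cond.
rewrite -[X in _ + X]big_seq_cond.
have -> : \sum_(i <- U | 0 < i) (i - pr i) * ind (i == b) = b - pr b.
  rewrite big_mkcond (bigD1_seq b) //= bpos /ind eqxx mulr1 big1 ?addr0 // => t tb.
  by case: ifP => // _; rewrite (negbTE tb) mulr0.
rewrite -/(J (fun t => ind (t <= pr b))) (IH (pr b)) //; first by rewrite subrK.
have : (cntlt (pr b) < cntlt b)%N.
  have H1 := count_predUI (fun t : R => (t < pr b)%R) (pred1 (pr b)) U.
  have H2 : count (predI (fun t : R => (t < pr b)%R) (pred1 (pr b))) U = 0%N.
    by apply/eqP; rewrite -leqn0 leqNgt -has_count; apply/hasP => -[t _] /= /andP[h /eqP e]; rewrite e ltxx in h.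
  have H3 : count (pred1 (pr b)) U = 1%N by rewrite count_uniq_mem ?prU.
  have H4 : (count (predU (fun t : R => (t < pr b)%R) (pred1 (pr b))) U <= cntlt b)%N.
    by apply: sub_count => t /= /orP[h|/eqP ->] //; apply: lt_trans h prlt.
  rewrite /cntlt; move: H1 H2 H3 H4; rewrite /cntlt; set A := count _ U; set B := count _ U; set C := count _ U; set D := count _ U; set E0 := count _ U; lia.
lia.
Qed.

End Cut.
Arguments pr {R} U t.
Arguments J {R} U F.
Arguments ind {R} b.
Arguments cntlt {R} U b.
Arguments J_le {R U} Uu U0 Uge0 b _.
Arguments pr_lt {R U t} _.
Arguments pr_ge {R U t s} _ _.
Arguments pr_mem {R U} U0 t.


Section JLin.
Variable R : realFieldType.
Variable U : seq R.

Lemma J_ext (F G : R -> R) : (forall t, t \in U -> 0 < t -> F t = G t) -> J U F = J U G.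
Proof. move=> h; rewrite /J big_seq_cond [in RHS]big_seq_cond; apply: eq_bigr => t /andP[tU t0]; by rewrite h. Qed.

Lemma J_add (F G : R -> R) : J U (fun t => F t + G t) = J U F + J U G.
Proof. by rewrite /J -big_split; apply: eq_bigr => t _; rewrite mulrDr. Qed.

Lemma J_sub (F G : R -> R) : J U (fun t => F t - G t) = J U F - J U G.
Proof. by rewrite /J -sumrB; apply: eq_bigr => t _; rewrite mulrBr. Qed.

Lemma J_scal c (F : R -> R) : J U (fun t => c * F t) = c * J U F.
Proof. by rewrite /J mulr_sumr; apply: eq_bigr => t _; rewrite mulrCA. Qed.

Lemma J0 : J U (fun _ => 0) = 0.
Proof. by rewrite /J big1 // => t _; rewrite mulr0. Qed.

Lemma J_sum (I : finType) (P : pred I) (F : I -> R -> R) :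
  J U (fun t => \sum_(i | P i) F i t) = \sum_(i | P i) J U (F i).
Proof.
rewrite /J exchange_big /=; apply: eq_bigr => t _; by rewrite mulr_sumr.
Qed.

Lemma J_mono (F G : R -> R) : (forall t, t \in U -> 0 < t -> F t <= G t) ->
  J U F <= J U G.
Proof.
move=> h; rewrite /J big_seq_cond [X in _ <= X]big_seq_cond; apply: ler_sum => t /andP[tU t0].
apply: ler_wpM2l; last exact: h.
rewrite subr_ge0 ltW //; exact: pr_lt.
Qed.

End JLin.


Section Pref.
Variable R : realType.

Definition pref n (w : 'I_n -> R) (a : nat) : R := \sum_(i < n | (i < a)%N) w i.

Lemma interval_sum n (w : 'I_n -> R) (l k : nat) : (l <= k)%N ->
  \sum_(i < n | (l <= i)%N && (i <= k)%N) w i = pref w k.+1 - pref w l.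
Proof.
move=> lk.
have H : pref w k.+1 = pref w l + \sum_(i < n | (l <= i)%N && (i <= k)%N) w i.
  rewrite /pref (bigID (fun i : 'I_n => (i < l)%N)) /=; congr (_ + _); apply: eq_bigl => i /=.
    rewrite andb_idl // => h; lia.
  by rewrite -leqNgt andbC ltnS.
by rewrite H [pref w l + _]addrC addrK.
Qed.

Lemma fobj_pref n (x : R) (w : 'I_n -> R) :
  fobj x w = \sum_(l < n) \sum_(k < n | (l <= k)%N) pos_part (x - (pref w k.+1 - pref w l)).
Proof.
by apply: eq_bigr => l _; apply: eq_bigr => k lk; rewrite interval_sum.
Qed.

Lemma pref_mono n (w : 'I_n -> R) a b : (forall i, 0 <= w i) -> (a <= b)%N -> pref w a <= pref w b.
Proof.
move=> w0 ab; rewrite /pref [X in X <= _]big_mkcond [X in _ <= X]big_mkcond /=.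
apply: ler_sum => i _; case: ifP => h1; first by rewrite ifT //; lia.
by case: ifP.
Qed.

Lemma pref_ge0 n (w : 'I_n -> R) a : (forall i, 0 <= w i) -> 0 <= pref w a.
Proof. by move=> w0; apply: sumr_ge0 => i _. Qed.

Lemma pref_le n (w : 'I_n -> R) a : (forall i, 0 <= w i) -> pref w a <= \sum_(i < n) w i.
Proof.
move=> w0; rewrite /pref [X in X <= _]big_mkcond /=.
by apply: ler_sum => i _; case: ifP.
Qed.

Lemma pref_n n (w : 'I_n -> R) : pref w n = \sum_(i < n) w i.
Proof. by rewrite /pref; apply: eq_bigl => i; rewrite ltn_ord. Qed.

End Pref.


Section Blk.
Variable R : realType.
Variable x : R.
Hypothesis x0 : 0 < x.

Definition bz (b : bool) : int := (b : nat)%:Z.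

Definition fl (p : R) : int := Num.floor (p / x).
Definition fr (p : R) : R := p - (fl p)%:~R * x.
Definition blk (p u : R) : int := Num.floor ((p - u) / x).

Lemma fl_bnd p : (fl p)%:~R * x <= p < (fl p)%:~R * x + x.
Proof.
have /andP[h1 h2] := floor_itv (p / x).
rewrite -ler_pdivlMr // h1 /=.
by rewrite intrD ltr_pdivrMr // mulrDl mul1r in h2.
Qed.

Lemma fr_ge0 p : 0 <= fr p.
Proof. have /andP[h1 h2] := fl_bnd p; rewrite /fr; lra. Qed.

Lemma fr_lt p : fr p < x.
Proof. have /andP[h1 h2] := fl_bnd p; rewrite /fr; lra. Qed.

Lemma blkE p u : 0 < u -> u <= x -> blk p u = fl p - bz (fr p < u).
Proof.
move=> u0 ux; apply: floor_def.
have /andP[h1 h2] := fl_bnd p.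
rewrite -addrA !intrD intrN ler_pdivlMr // ltr_pdivrMr //.
set F := (fl p)%:~R. rewrite /fr -/F /bz.
case: (ltrP (p - F * x) u) => h /=.
  rewrite !mulrDl; apply/andP; split; lra.
rewrite !mulrDl; apply/andP; split; lra.
Qed.

Lemma pos_id (a : R) : 0 <= a -> pos_part a = a.
Proof. by move=> h; rewrite /pos_part max_l. Qed.

Lemma pos_0 (a : R) : a <= 0 -> pos_part a = 0.
Proof. by move=> h; rewrite /pos_part max_r. Qed.

Lemma fl_mono pa pb : pa <= pb -> (fl pa <= fl pb)%R.
Proof. by move=> h; apply: le_floor; rewrite ler_pdivlMr // divfK ?gt_eqF. Qed.

End Blk.


Section Phi.
Variable R : realType.

Definition Phi (N K q : nat) : R := (q * N)%:R - (K * (q * (q + 1)))%:R / 2.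

Lemma phi_bound n (kap : nat -> nat) K q : (forall a, (a <= n)%N -> (kap a < K)%N) ->
  Phi n.+1 K q <= (pairsum_nat n kap)%:R.
Proof.
move=> hK; have h1 := count_lemma hK; have h2 := cnt_sum hK.
have h3 := sumsq_bound K (cnt n kap) q; rewrite h2 in h3.
have e : ((2 * q + 1) * n.+1 = 2 * (q * n.+1) + n.+1)%N by rewrite mulnDl mul1n mulnA.
rewrite e in h3.
have h4 : (2 * (q * n.+1) <= 2 * pairsum_nat n kap + K * (q * (q + 1)))%N by lia.
have := h4; rewrite -(ler_nat R) !natrD !natrM /Phi => h5.
lra.
Qed.

Lemma phi_eq n (kap : nat -> nat) K q : (forall a, (a <= n)%N -> (kap a < K)%N) ->
  (forall c, (c < K)%N -> cnt n kap c = q \/ cnt n kap c = q.+1) ->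
  Phi n.+1 K q = (pairsum_nat n kap)%:R.
Proof.
move=> hK hc; have h1 := count_lemma hK; have h2 := cnt_sum hK.
have h3 := sumsq_eq hc; rewrite h2 in h3.
have e : ((2 * q + 1) * n.+1 = 2 * (q * n.+1) + n.+1)%N by rewrite mulnDl mul1n mulnA.
rewrite e in h3.
have h4 : (2 * (q * n.+1) = 2 * pairsum_nat n kap + K * (q * (q + 1)))%N by lia.
have := congr1 (fun k : nat => k%:R : R) h4; rewrite /= !natrD !natrM /Phi => h5.
lra.
Qed.

End Phi.


Section PJ.
Variable R : realType.

Lemma ind_bz0 (F : int) (e1 e2 : bool) : (e2 -> e1) ->
  ind (F - bz e1 == F - bz e2) = ind (~~ e1) + 1 - ind (~~ e2) :> R.
Proof.
case: e1; case: e2 => /= H; try by case: (H isT).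
all: rewrite /bz /ind /=; case: eqP => h /=.
all: try lia.
all: lra.
Qed.

Lemma ind_bz1 (F : int) (e1 e2 : bool) : (e1 -> e2) ->
  ind (F - bz e1 == F + 1 - bz e2) = ind (~~ e1) - ind (~~ e2) :> R.
Proof.
case: e1; case: e2 => /= H; try by case: (H isT).
all: rewrite /bz /ind /=; case: eqP => h /=.
all: try lia.
all: lra.
Qed.

Lemma ind_bz1' (F : int) (e1 e2 : bool) : (~~ e1 -> ~~ e2) ->
  ind (F - bz e1 == F + 1 - bz e2) = 0 :> R.
Proof.
case: e1; case: e2 => /= H; try by case: (H isT).
all: rewrite /bz /ind /=; case: eqP => h /=.
all: try lia.
all: lra.
Qed.

Lemma ind_bz2 (F G : int) (e1 e2 : bool) : (F + 2 <= G)%R ->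
  ind (F - bz e1 == G - bz e2) = 0 :> R.
Proof.
move=> hG; case: e1; case: e2; rewrite /bz /ind /=; case: eqP => h /=.
all: try lia.
all: lra.
Qed.

Lemma int_tri (a b : int) : (a <= b)%R -> b = a \/ b = a + 1 \/ (a + 2 <= b)%R.
Proof. move=> h; lia. Qed.

Variable x : R.
Hypothesis x0 : 0 < x.

Lemma pair_J (U : seq R) : uniq U -> 0 \in U -> (forall t, t \in U -> 0 <= t <= x) -> x \in U ->
  forall pa pb, pa <= pb -> fr x pa \in U -> fr x pb \in U ->
  J U (fun u => ind (blk x pa u == blk x pb u)) = pos_part (x - (pb - pa)).
Proof.
move=> Uu U0 Ub xU pa pb pab aU bU.
have Uge0 : forall t, t \in U -> 0 <= t by move=> t /Ub /andP[].
have Jle := J_le Uu U0 Uge0.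
have ha := fl_bnd x0 pa; have hb := fl_bnd x0 pb.
have a0 := fr_ge0 x0 pa; have ax := fr_lt x0 pa; have b0 := fr_ge0 x0 pb; have bx := fr_lt x0 pb.
have Fle := fl_mono x0 pab.
have [FE|[FE|FE]] := int_tri Fle.
- have dE : pb - pa = fr x pb - fr x pa by rewrite /fr FE; ring.
  have ab : fr x pa <= fr x pb by lra.
  rewrite dE pos_id; last lra.
  rewrite (J_ext (G := fun u => ind (u <= fr x pa) + ind (u <= x) - ind (u <= fr x pb))); last first.
    move=> u uU u0; have /andP[_ ux] := Ub u uU.
    rewrite (blkE x0 pa u0 ux) (blkE x0 pb u0 ux) FE ind_bz0; last first.
      by move=> h; apply: le_lt_trans ab h.
    by rewrite -!leNgt [ind (u <= x)]/ind ux.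
  by rewrite J_sub J_add !Jle //; ring.
- have dE : pb - pa = x + fr x pb - fr x pa by rewrite /fr FE intrD; ring.
  rewrite dE.
  case: (lerP (fr x pb) (fr x pa)) => ab.
    rewrite pos_id; last lra.
    rewrite (J_ext (G := fun u => ind (u <= fr x pa) - ind (u <= fr x pb))); last first.
      move=> u uU u0; have /andP[_ ux] := Ub u uU.
      rewrite (blkE x0 pa u0 ux) (blkE x0 pb u0 ux) FE ind_bz1; last first.
        by move=> h; apply: le_lt_trans ab h.
      by rewrite -!leNgt.
    by rewrite J_sub !Jle //; ring.
  rewrite pos_0; last lra.
  rewrite (J_ext (G := fun u => 0)); first exact: J0.
  move=> u uU u0; have /andP[_ ux] := Ub u uU.
  rewrite (blkE x0 pa u0 ux) (blkE x0 pb u0 ux) FE ind_bz1' // -!leNgt => h.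
  exact: le_trans h (ltW ab).
- rewrite pos_0; last first.
    have h2 : (fl x pa)%:~R + 2 <= (fl x pb)%:~R :> R.
      by rewrite -[2]/((2%:Z)%:~R) -intrD ler_int.
    have h3 : ((fl x pa)%:~R + 2) * x <= (fl x pb)%:~R * x by rewrite ler_wpM2r // ltW.
    rewrite mulrDl in h3; lra.
  rewrite (J_ext (G := fun u => 0)); first exact: J0.
  move=> u uU u0; have /andP[_ ux] := Ub u uU.
  by rewrite (blkE x0 pa u0 ux) (blkE x0 pb u0 ux) ind_bz2.
Qed.

End PJ.


Lemma kap_lt (z : int) (K : nat) : (-1 <= z)%R -> (z < K%:Z)%R -> (absz (z + 1)%R < K.+1)%N.
Proof.
move=> h1 h2; have e : ((absz (z + 1))%:Z = z + 1)%R by rewrite gez0_abs //; lia.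
rewrite -ltz_nat e; clear e; lia.
Qed.

Lemma kap_eq (z1 z2 : int) : (-1 <= z1)%R -> (-1 <= z2)%R ->
  (absz (z1 + 1)%R == absz (z2 + 1)%R)%N = (z1 == z2).
Proof.
move=> h1 h2.
have e1 : ((absz (z1 + 1))%:Z = z1 + 1)%R by rewrite gez0_abs //; lia.
have e2 : ((absz (z2 + 1))%:Z = z2 + 1)%R by rewrite gez0_abs //; lia.
rewrite -eqz_nat e1 e2; clear e1 e2; apply/eqP/eqP => h; lia.
Qed.

Section LB.
Variable R : realType.
Variable x : R.
Hypothesis x0 : 0 < x.

Lemma blk_ge (p u : R) : 0 <= p -> u <= x -> (-1 <= blk x p u)%R.
Proof.
move=> p0 ux; rewrite /blk floor_ge_int ler_pdivlMr //.
have -> : ((-1 : int)%:~R : R) = -1 by [].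
lra.
Qed.

Lemma blk_lt (p u : R) (k : nat) : p - u < k%:R * x -> (blk x p u < k%:Z)%R.
Proof. by move=> h; rewrite /blk floor_lt_int ltr_pdivrMr. Qed.

Lemma lower_bound n (v r : R) (m : nat) (w : 'I_n -> R) :
  Lambda v w -> v = m%:R * x + r -> 0 <= r -> r < x ->
  r * Phi R n.+1 m.+2 (n.+1 %/ m.+2) + (x - r) * Phi R n.+1 m.+1 (n.+1 %/ m.+1) <= fobj x w.
Proof.
move=> [w0 ws] vE r0 rx.
pose p := pref w.
have p0 : forall a, 0 <= p a by move=> a; exact: pref_ge0.
have pv : forall a, p a <= v by move=> a; rewrite -ws; exact: pref_le.
pose U := undup ([:: 0; x; r] ++ [seq fr x (p a) | a <- iota 0 n.+1]).
have Uu : uniq U := undup_uniq _.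
have U0 : 0 \in U by rewrite mem_undup mem_cat !inE eqxx.
have xU : x \in U by rewrite mem_undup mem_cat !inE eqxx orbT.
have rU : r \in U by rewrite mem_undup mem_cat !inE eqxx !orbT.
have aU : forall a, (a <= n)%N -> fr x (p a) \in U.
  move=> a an; rewrite mem_undup mem_cat; apply/orP; right.
  by apply/mapP; exists a => //; rewrite mem_iota add0n ltnS an.
have Ub : forall t, t \in U -> 0 <= t <= x.
  move=> t; rewrite mem_undup mem_cat => /orP[|/mapP[a _ ->]].
    rewrite !inE => /orP[/eqP->|/orP[/eqP->|/eqP->]].
    - by rewrite lexx ltW.
    - by rewrite lexx ltW.
    - by rewrite r0 ltW.
  by rewrite fr_ge0 // ltW // fr_lt.
have Uge0 : forall t, t \in U -> 0 <= t by move=> t /Ub /andP[].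
rewrite fobj_pref.
have step : \sum_(l < n) \sum_(k < n | (l <= k)%N) pos_part (x - (pref w k.+1 - pref w l))
   = J U (fun u => \sum_(l < n) \sum_(k < n | (l <= k)%N) ind (blk x (p l) u == blk x (p k.+1) u)).
  rewrite J_sum; apply: eq_bigr => l _; rewrite J_sum; apply: eq_bigr => k lk.
  rewrite (pair_J x0 Uu U0 Ub xU) //.
  - by apply: pref_mono => //; apply: leqW.
  - by apply: aU; apply: ltnW (ltn_ord l).
  - by apply: aU; apply: ltn_ord k.
rewrite step.
set P2 := Phi R n.+1 m.+2 _; set P1 := Phi R n.+1 m.+1 _.
have JL : J U (fun u => P2 * ind (u <= r) + P1 * (ind (u <= x) - ind (u <= r))) = r * P2 + (x - r) * P1.
  by rewrite J_add !J_scal J_sub !(J_le Uu U0 Uge0) //; ring.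
rewrite -JL; apply: J_mono => u uU u0.
have /andP[_ ux] := Ub u uU.
have bge : forall a, (-1 <= blk x (p a) u)%R by move=> a; apply: blk_ge.
pose kap := fun a => absz (blk x (p a) u + 1)%R.
have Ekap : \sum_(l < n) \sum_(k < n | (l <= k)%N) ind (blk x (p l) u == blk x (p k.+1) u)
    = (pairsum_nat n kap)%:R :> R.
  rewrite /pairsum_nat natr_sum; apply: eq_bigr => l _; rewrite natr_sum; apply: eq_bigr => k _.
  by rewrite /kap kap_eq.
rewrite Ekap [ind (u <= x)]/ind ux.
case: (leP u r) => ur.
- have hb : P2 <= (pairsum_nat n kap)%:R.
    apply: phi_bound => a an; apply: kap_lt => //; apply: blk_lt => //.
    rewrite -addn1 natrD mulrDl mul1r; have := pv a; lra.
  rewrite /ind /=; lra.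
- have hb : P1 <= (pairsum_nat n kap)%:R.
    apply: phi_bound => a an; apply: kap_lt => //; apply: blk_lt => //.
    have := pv a; lra.
  rewrite /ind /=; lra.
Qed.

End LB.


Section Up.
Variable R : realType.

Lemma pos_sum_le (I : finType) (lam t : I -> R) : (forall j, 0 <= lam j) ->
  pos_part (\sum_j lam j * t j) <= \sum_j lam j * pos_part (t j).
Proof.
move=> l0; rewrite /pos_part ge_max; apply/andP; split.
  by apply: ler_sum => j _; apply: ler_wpM2l => //; rewrite le_max lexx.
by apply: sumr_ge0 => j _; apply: mulr_ge0 => //; rewrite le_max lexx orbT.
Qed.

Lemma pos2_le (a b s t : R) : 0 <= a -> 0 <= b ->
  pos_part (a * s + b * t) <= a * pos_part s + b * pos_part t.
Proof.
move=> a0 b0; rewrite /pos_part ge_max; apply/andP; split.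
  by apply: lerD; apply: ler_wpM2l => //; rewrite le_max lexx.
by apply: addr_ge0; apply: mulr_ge0 => //; rewrite le_max lexx orbT.
Qed.

Lemma fobj_conv n k (x : R) (lam : 'I_k -> R) (q : 'I_k -> 'I_n -> R) :
  (forall j, 0 <= lam j) -> \sum_(j < k) lam j = 1 ->
  fobj x (fun i => \sum_(j < k) lam j * q j i) <= \sum_(j < k) lam j * fobj x (q j).
Proof.
move=> l0 l1; rewrite /fobj.
rewrite (eq_bigr (fun j => \sum_(l < n) \sum_(k0 < n | (l <= k0)%N)
   lam j * pos_part (x - \sum_(i < n | (l <= i)%N && (i <= k0)%N) q j i))); last first.
  by move=> j _; rewrite mulr_sumr; apply: eq_bigr => l _; rewrite mulr_sumr.
rewrite exchange_big /=; apply: ler_sum => l _.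
rewrite exchange_big /=; apply: ler_sum => k0 _.
have e : x - \sum_(i < n | (l <= i)%N && (i <= k0)%N) \sum_(j < k) lam j * q j i =
    \sum_(j < k) lam j * (x - \sum_(i < n | (l <= i)%N && (i <= k0)%N) q j i).
  rewrite (eq_bigr (fun j => lam j * x - \sum_(i < n | (l <= i)%N && (i <= k0)%N) lam j * q j i));
    last by move=> j _; rewrite mulrBr mulr_sumr.
  by rewrite sumrB -mulr_suml l1 mul1r [X in _ = _ - X]exchange_big.
by rewrite e; apply: pos_sum_le.
Qed.

Lemma fobj_conv2 n (x a b : R) (A B : 'I_n -> R) : 0 <= a -> 0 <= b -> a + b = 1 ->
  fobj x (fun i => a * A i + b * B i) <= a * fobj x A + b * fobj x B.
Proof.
move=> a0 b0 ab; rewrite /fobj !mulr_sumr -big_split /=; apply: ler_sum => l _.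
rewrite !mulr_sumr -big_split /=; apply: ler_sum => k _.
have e : x - \sum_(i < n | (l <= i)%N && (i <= k)%N) (a * A i + b * B i) =
   a * (x - \sum_(i < n | (l <= i)%N && (i <= k)%N) A i) +
   b * (x - \sum_(i < n | (l <= i)%N && (i <= k)%N) B i).
  rewrite big_split /= -!mulr_sumr.
  have hx : x = a * x + b * x by rewrite -mulrDl ab mul1r.
  rewrite {1}hx; ring.
by rewrite e; apply: pos2_le.
Qed.

Lemma pref_mv n p d (c : R) a : pref (marked_vec (n := n) p d c) a = c * (cm n p d a)%:R.
Proof.
rewrite /pref /cm natr_sum mulr_sumr big_mkcond /=; apply: eq_bigr => i _.
by rewrite /marked_vec; case: (i < a)%N; case: (marked _ _ _); rewrite /= ?mulr1 ?mulr0.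
Qed.

Lemma cm_mono n p d a b : (a <= b)%N -> (cm n p d a <= cm n p d b)%N.
Proof.
move=> ab; rewrite /cm; apply: leq_sum => i _.
case: (i < a)%N / idP => h //=; rewrite (leq_trans h ab) /=; by case: (marked _ _ _).
Qed.

Lemma fobj_mv n p d (x : R) : 0 < x ->
  fobj x (marked_vec (n := n) p d x) = x * (pairsum_nat n (cm n p d))%:R.
Proof.
move=> x0; rewrite fobj_pref /pairsum_nat natr_sum mulr_sumr; apply: eq_bigr => l _.
rewrite natr_sum mulr_sumr; apply: eq_bigr => k lk.
rewrite !pref_mv.
have mono : (cm n p d l <= cm n p d k.+1)%N by apply: cm_mono; apply: leqW.
case: (eqVneq (cm n p d l) (cm n p d k.+1)) => E.
  by rewrite E subrr subr0 pos_id ?mulr1 // ltW.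
have lt : (cm n p d l + 1 <= cm n p d k.+1)%N by rewrite addn1 ltn_neqAle E mono.
have := lt; rewrite -(ler_nat R) natrD => lt'.
have h : x * (cm n p d l)%:R + x <= x * (cm n p d k.+1)%:R.
  by rewrite -[X in _ + X]mulr1 -mulrDr ler_wpM2l // ltW.
rewrite pos_0 /=; last lra.
by rewrite mulr0.
Qed.

Lemma fobj_mv_phi n p d (x : R) : 0 < x -> valid_gaps n p d -> (p <= n)%N ->
  fobj x (marked_vec (n := n) p d x) = x * Phi R n.+1 p.+1 (n.+1 %/ p.+1).
Proof.
move=> x0 vg pn; rewrite fobj_mv // -(@phi_eq R n (cm n p d) p.+1 (n.+1 %/ p.+1)) //.
  by move=> a an; apply: cm_lt.
move=> c cp; rewrite (cnt_cm vg pn cp).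
by have [h _] := vg; case: (h c cp) => ->; [left | right].
Qed.

Lemma sum_mv n p d (c : R) : valid_gaps n p d -> (p <= n)%N ->
  \sum_(i < n) marked_vec (n := n) p d c i = c * p%:R.
Proof. by move=> vg pn; rewrite -pref_n pref_mv (cm_n vg pn). Qed.

End Up.


Lemma fobj_ext (R : realType) n (x : R) (A B : 'I_n -> R) : (forall i, A i = B i) -> fobj x A = fobj x B.
Proof.
move=> h; apply: eq_bigr => l _; apply: eq_bigr => k _; congr (pos_part (_ - _)).
by apply: eq_bigr => i _; rewrite h.
Qed.

Arguments fobj_ext {R n x A} B _.

Lemma gamma_bound (R : realType) n m (x r : R) (w : 'I_n -> R) :
  0 < x -> 0 <= r -> r < x -> (m < n)%N -> Gamma m (x - r) r w ->
  fobj x w <= r * Phi R n.+1 m.+2 (n.+1 %/ m.+2) + (x - r) * Phi R n.+1 m.+1 (n.+1 %/ m.+1).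
Proof.
move=> x0 r0 rx mn [dy [dr [vgy vgr wE]]].
set y := x - r.
have y0 : 0 <= y by rewrite /y; lra.
have xn0 : x != 0 by rewrite gt_eqF.
rewrite (fobj_ext (fun i => (y / x) * marked_vec m dy x i + (r / x) * marked_vec m.+1 dr x i)); last first.
  move=> i; rewrite wE /marked_vec.
  by case: (marked _ _ _); case: (marked _ _ _); rewrite ?mulr0 ?divfK.
have ha : 0 <= y / x by apply: divr_ge0 => //; apply: ltW.
have hb : 0 <= r / x by apply: divr_ge0 => //; apply: ltW.
have hab : y / x + r / x = 1 by rewrite -mulrDl /y subrK divff.
apply: le_trans; first exact: (fobj_conv2 x _ _ ha hb hab).
rewrite (fobj_mv_phi x0 vgy (ltnW mn)) (fobj_mv_phi x0 vgr mn).
rewrite !mulrA !divfK //; lra.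
Qed.

Lemma gamma_lambda (R : realType) n m (x r v : R) (w : 'I_n -> R) :
  0 <= r -> r <= x -> (m < n)%N -> v = m%:R * x + r -> Gamma m (x - r) r w -> Lambda v w.
Proof.
move=> r0 rx mn vE [dy [dr [vgy vgr wE]]]; split.
  move=> i; rewrite wE /marked_vec.
  by apply: addr_ge0; case: (marked _ _ _) => //; lra.
rewrite (eq_bigr (fun i => marked_vec m dy (x - r) i + marked_vec m.+1 dr r i)); last by move=> i _; rewrite wE.
rewrite big_split /= (sum_mv _ vgy (ltnW mn)) (sum_mv _ vgr mn) vE -addn1 natrD; ring.
Qed.

Theorem mainTheorem2 (R : realType) (n : nat) (x v : R) :
  (1 <= n)%N -> 0 < x -> 0 < v -> v < n%:R * x ->
  let m : nat := `|Num.floor (v / x)|%N in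
  let r : R := v - m%:R * x in
  let y : R := x - r in
  forall w : 'I_n -> R, conv_hull (@Gamma R n m y r) w ->
    Lambda v w /\ (forall u : 'I_n -> R, Lambda v u -> fobj x w <= fobj x u).
Proof.
move=> n1 x0 v0 vlt m r y w [k [lam [q [l0 l1 qG wE]]]].
have F0 : (0 <= Num.floor (v / x))%R by rewrite floor_ge0 divr_ge0 // ltW.
have mE : (m%:R : R) = (Num.floor (v / x))%:~R by rewrite /m natr_absz ger0_norm.
have hF := fl_bnd x0 v; rewrite /fl -mE in hF.
have /andP[hF1 hF2] := hF.
have r0 : 0 <= r by rewrite /r; lra.
have rx : r < x by rewrite /r; lra.
have mn : (m < n)%N.
  have : m%:R * x < n%:R * x by lra.
  by rewrite ltr_pM2r // ltr_nat.
have vE : v = m%:R * x + r by rewrite /r; ring.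
set V := r * Phi R n.+1 m.+2 (n.+1 %/ m.+2) + (x - r) * Phi R n.+1 m.+1 (n.+1 %/ m.+1).
have qL : forall j, Lambda v (q j) by move=> j; apply: (gamma_lambda r0 (ltW rx) mn vE); exact: qG.
have qV : forall j, fobj x (q j) <= V by move=> j; apply: gamma_bound => //; exact: qG.
split.
  split.
    by move=> i; rewrite wE; apply: sumr_ge0 => j _; apply: mulr_ge0 => //; case: (qL j) => h _.
  rewrite (eq_bigr (fun i => \sum_(j < k) lam j * q j i)); last by move=> i _; rewrite wE.
  rewrite exchange_big /= (eq_bigr (fun j => lam j * v)); last first.
    by move=> j _; rewrite -mulr_sumr; case: (qL j) => _ ->.
  by rewrite -mulr_suml l1 mul1r.
move=> u uL.
apply: le_trans; last exact: (lower_bound x0 uL vE r0 rx).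
rewrite (fobj_ext (fun i => \sum_(j < k) lam j * q j i)) //.
apply: le_trans; first exact: (fobj_conv x _ l0 l1).
apply: le_trans (_ : \sum_(j < k) lam j * V <= V).
  by apply: ler_sum => j _; apply: ler_wpM2l.
by rewrite -mulr_suml l1 mul1r.
Qed.
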